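(* Let $x_2>0$, $x_1\in(0,x_2)$ and $y_1,y_2,y_3\in\mathbb R$ with $0<y_3<y_1\le y_2$. Define $\rho_1,\rho_2:[0,x_2]\to\mathbb R$ by $\rho_1(x)=\frac{y_2-y_1}{x_1}x+y_1$ for $x\in[0,x_1]$, $\rho_1(x)=\frac{y_3-y_2}{x_2-x_1}(x-x_1)+y_2$ for $x\in(x_1,x_2]$, and $\rho_2(x)=\frac{y_3-y_1}{x_2}x+y_1$. Then $\mathcal N(\rho_2)\le\mathcal N(\rho_1)$, where $\mathcal N(\rho)=\int_0^{x_2}\frac{(\rho')^2}{\rho\sqrt{1+(\rho')^2}}\,dx$. *)

(* Defs.v *)
From Stdlib Require Import Reals Lra.
From Coquelicot Require Import Coquelicot.
Open Scope R_scope.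

Definition N_fun (rho : R -> R) (b : R) : R :=
  RInt (fun x => (Derive rho x) ^ 2 / (rho x * sqrt (1 + (Derive rho x) ^ 2))) 0 b.

Definition rho1 (x1 x2 y1 y2 y3 : R) (x : R) : R :=
  if Rle_dec x x1 then (y2 - y1) / x1 * x + y1
  else (y3 - y2) / (x2 - x1) * (x - x1) + y2.

Definition rho2 (x2 y1 y3 : R) (x : R) : R := (y3 - y1) / x2 * x + y1.

(* Main.v *)
Require Import Defs.
From Stdlib Require Import Reals Lra.
From Coquelicot Require Import Coquelicot.
Open Scope R_scope.

Definition gg (s : R) := s / sqrt (1 + s ^ 2).

Lemma lin_int (s t p q : R) : p <= q -> (forall x, p <= x <= q -> 0 < s * x + t) ->
  is_RInt (fun x => s ^ 2 / ((s * x + t) * sqrt (1 + s ^ 2))) p q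
    (gg s * (ln (s * q + t) - ln (s * p + t))).
Proof.
  intros Hpq Hpos.
  assert (Hsq : 0 < sqrt (1 + s ^ 2)) by (apply sqrt_lt_R0; nra).
  replace (gg s * (ln (s * q + t) - ln (s * p + t))) with
    (minus ((fun x => gg s * ln (s * x + t)) q) ((fun x => gg s * ln (s * x + t)) p))
    by (unfold minus, plus, opp; simpl; ring).
  apply (is_RInt_derive (fun x => gg s * ln (s * x + t))).
  - intros x Hx. rewrite Rmin_left in Hx by lra. rewrite Rmax_right in Hx by lra.
    specialize (Hpos x Hx).
    auto_derive. lra. unfold gg. field. split; lra.
  - intros x Hx. rewrite Rmin_left in Hx by lra. rewrite Rmax_right in Hx by lra.
    specialize (Hpos x Hx).
    apply continuity_pt_filterlim.
    apply continuity_pt_div. apply continuity_pt_const. intros ? ?; reflexivity.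
    apply continuity_pt_mult. apply continuity_pt_plus. apply continuity_pt_mult.
    apply continuity_pt_const. intros ? ?; reflexivity. apply continuity_pt_id.
    apply continuity_pt_const. intros ? ?; reflexivity.
    apply continuity_pt_const. intros ? ?; reflexivity.
    apply Rgt_not_eq. apply Rmult_lt_0_compat; lra.
Qed.

Lemma gg_mono (b c : R) : b <= c -> c < 0 -> gg b <= gg c.
Proof.
  intros Hbc Hc. unfold gg.
  assert (H1 : 0 < sqrt (1 + b ^ 2)) by (apply sqrt_lt_R0; nra).
  assert (H2 : 0 < sqrt (1 + c ^ 2)) by (apply sqrt_lt_R0; nra).
  assert (K : (- c) * sqrt (1 + b ^ 2) <= (- b) * sqrt (1 + c ^ 2)).
  { rewrite <- (sqrt_pow2 (- c)) by lra. rewrite <- (sqrt_pow2 (- b)) by lra.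
    rewrite <- !sqrt_mult_alt by nra. apply sqrt_le_1_alt. nra. }
  apply (Rmult_le_reg_r (sqrt (1 + b ^ 2) * sqrt (1 + c ^ 2))). nra.
  field_simplify; try lra. all: try nra.
Qed.

Theorem lemma2p3 (x1 x2 y1 y2 y3 : R)
  (hx2 : 0 < x2) (hx1 : 0 < x1) (hx12 : x1 < x2)
  (hy3 : 0 < y3) (hy31 : y3 < y1) (hy12 : y1 <= y2) :
  N_fun (rho2 x2 y1 y3) x2 <= N_fun (rho1 x1 x2 y1 y2 y3) x2.
Proof.
  set (a := (y2 - y1) / x1). set (b := (y3 - y2) / (x2 - x1)). set (c := (y3 - y1) / x2).
  assert (Ha : a * x1 = y2 - y1) by (unfold a; field; lra).
  assert (Hb : b * (x2 - x1) = y3 - y2) by (unfold b; field; lra).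
  assert (Hc : c * x2 = y3 - y1) by (unfold c; field; lra).
  assert (a0 : 0 <= a) by (destruct (Rle_dec 0 a); nra).
  assert (c0 : c < 0) by (destruct (Rle_dec 0 c); nra).
  assert (bc : b <= c) by (destruct (Rle_dec b c); nra).
  assert (I2 : N_fun (rho2 x2 y1 y3) x2 = gg c * (ln (c * x2 + y1) - ln (c * 0 + y1))).
  { unfold N_fun. apply is_RInt_unique.
    eapply is_RInt_ext; [| apply lin_int; [lra | intros; nra]].
    intros x _. unfold rho2. fold c.
    replace (Derive (fun x0 => c * x0 + y1) x) with c.
    reflexivity. symmetry. apply is_derive_unique. auto_derive; auto; try ring. }
  assert (I1 : N_fun (rho1 x1 x2 y1 y2 y3) x2 =
     plus (gg a * (ln (a * x1 + y1) - ln (a * 0 + y1)))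
          (gg b * (ln (b * x2 + (y2 - b * x1)) - ln (b * x1 + (y2 - b * x1))))).
  { unfold N_fun. apply is_RInt_unique.
    apply (@is_RInt_Chasles R_NormedModule _ 0 x1 x2).
    - eapply is_RInt_ext; [| apply lin_int; [lra | intros; nra]].
      intros x Hx. rewrite Rmin_left in Hx by lra. rewrite Rmax_right in Hx by lra.
      replace (Derive (rho1 x1 x2 y1 y2 y3) x) with a.
      unfold rho1. destruct (Rle_dec x x1); [| lra]. reflexivity.
      symmetry. rewrite (Derive_ext_loc _ (fun x0 => a * x0 + y1)).
      apply is_derive_unique. auto_derive; auto; try ring.
      apply (filter_imp (fun y => y < x1)).
      intros y Hy. unfold rho1. destruct (Rle_dec y x1); [reflexivity | lra].
      apply open_lt. lra.
    - eapply is_RInt_ext; [| apply lin_int; [lra | intros; nra]].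
      intros x Hx. rewrite Rmin_left in Hx by lra. rewrite Rmax_right in Hx by lra.
      replace (Derive (rho1 x1 x2 y1 y2 y3) x) with b.
      unfold rho1. destruct (Rle_dec x x1); [lra |]. fold b. f_equal. f_equal. ring.
      symmetry. rewrite (Derive_ext_loc _ (fun x0 => b * x0 + (y2 - b * x1))).
      apply is_derive_unique. auto_derive; auto; try ring.
      apply (filter_imp (fun y => x1 < y)).
      intros y Hy. unfold rho1. destruct (Rle_dec y x1); [lra |]. fold b. ring.
      apply open_gt. lra. }
  rewrite I1, I2. unfold plus; simpl.
  replace (c * x2 + y1) with y3 by lra. replace (c * 0 + y1) with y1 by ring.
  replace (a * x1 + y1) with y2 by lra. replace (a * 0 + y1) with y1 by ring.
  replace (b * x2 + (y2 - b * x1)) with y3 by lra. replace (b * x1 + (y2 - b * x1)) with y2 by ring.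
  assert (g1 : 0 <= gg a) by (unfold gg; apply Rmult_le_pos; [lra | left; apply Rinv_0_lt_compat, sqrt_lt_R0; nra]).
  assert (g2 : gg b <= gg c) by (apply gg_mono; lra).
  assert (g3 : gg c < 0) by (unfold gg; apply Rmult_neg_pos; [lra | apply Rinv_0_lt_compat, sqrt_lt_R0; nra]).
  assert (l1 : ln y1 <= ln y2) by (apply ln_le; lra).
  assert (l2 : ln y3 < ln y1) by (apply ln_increasing; lra).
  nra.
Qed.
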